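(* Let $p\ge1$ and let $T_\alpha{}_i^{k_1\cdots k_p}=T_\alpha{}_i^{(k_1\cdots k_p)}$ be constants (indices $i,k_r\in\{0,1,2,3\}$, $\alpha$ ranging over a finite index set) such that \[T_\alpha{}_i^{k_1\cdots k_p}\,a^\alpha_{k_1\cdots k_p}{}_j{}^j=T_\alpha{}_j^{k_1\cdots k_p}\,a^\alpha_{k_1\cdots k_p}{}_i{}^j\] holds identically in the variables $a^\alpha_{i_1\cdots i_{p+2}}$, which are arbitrary and totally symmetric in their lower indices. Then there are constants $S_\alpha^{k_1\cdots k_{p-1}}=S_\alpha^{(k_1\cdots k_{p-1})}$ such that $T_\alpha{}_i^{k_1\cdots k_p}=\delta_i^{(k_1}S_\alpha^{k_2\cdots k_p)}$.
   Context: Indices are raised and lowered with the Minkowski metric $\eta=\mathrm{diag}(-1,1,1,1)$, round brackets denote symmetrization, repeated indices are summed. *)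

(* Defs.v *)
From HB Require Import structures.
From mathcomp Require Import all_boot all_order all_algebra all_fingroup.
From mathcomp Require Import reals.
Set Implicit Arguments. Unset Strict Implicit. Unset Printing Implicit Defensive.
Import Order.TTheory GRing.Theory Num.Theory.
Local Open Scope ring_scope.

Notation midx n := {ffun 'I_n -> 'I_4}.

(* Minkowski metric eta = diag(-1,1,1,1); its inverse eta^{jl} has the
   same components, and is the one used to raise indices. *)
Definition eta_inv {R : ringType} (j l : 'I_4) : R :=
  if j == l then (if (j : nat) == 0%N then -1 else 1) else 0.

Definition kdelta {R : ringType} (i k : 'I_4) : R := (i == k)%:R.

Definition totally_symmetric {R : Type} {n : nat} (f : midx n -> R) : Prop :=
  forall (s : {perm 'I_n}) (k : midx n), f [ffun x => k (s x)] = f k.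

Definition ext2 {p : nat} (k : midx p) (j l : 'I_4) : midx (p + 2) :=
  [ffun m : 'I_(p + 2) =>
     match split m with
     | inl x => k x
     | inr y => if (y : nat) == 0%N then j else l
     end].

Definition sym_delta_S {R : realType} {q : nat} (i : 'I_4)
  (S : midx q -> R) (k : midx q.+1) : R :=
  ((q.+1)`!%:R)^-1 *
  \sum_(s : {perm 'I_q.+1})
     kdelta i (k (s ord0)) * S [ffun x => k (s (lift ord0 x))].

(* Main.v *)
Require Import Defs.
From HB Require Import structures.
From mathcomp Require Import all_boot all_order all_algebra all_fingroup.
From mathcomp Require Import reals.
From mathcomp Require Import mpoly.
Set Implicit Arguments. Unset Strict Implicit. Unset Printing Implicit Defensive.
Import Order.TTheory GRing.Theory Num.Theory.
Local Open Scope ring_scope.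

Section Aux.
Variable R : realType.

Definition mnm n (k : midx n) : 'X_{1..4} := (\sum_(x < n) U_(k x))%MM.
Definition Phi n (F : midx n -> R) : {mpoly R[4]} := \sum_k F k *: 'X_[mnm k].
Definition prm n (s : {perm 'I_n}) (k : midx n) : midx n := [ffun x => k (s x)].
Definition cns n (j : 'I_4) (k : midx n) : midx n.+1 :=
  [ffun x => if unlift ord0 x is Some y then k y else j].
Definition tl n (k : midx n.+1) : midx n := [ffun x => k (lift ord0 x)].

Lemma mnmE' n (k : midx n) c : mnm k c = (\sum_(x < n) (k x == c))%N.
Proof. by rewrite /mnm mnm_sumE; apply: eq_bigr => x _; rewrite mnm1E. Qed.

Lemma mnm_prm n s (k : midx n) : mnm (prm s k) = mnm k.
Proof.
apply/mnmP => c; rewrite !mnmE'.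
rewrite [RHS](reindex_inj (@perm_inj _ s)) /=.
by apply: eq_bigr => x _; rewrite ffunE.
Qed.

Lemma prm_inj n s : injective (@prm n s).
Proof.
move=> k1 k2 /ffunP H; apply/ffunP => y.
by move: (H (s^-1 y)%g); rewrite !ffunE permKV.
Qed.

Lemma sum_prm n s (G : midx n -> R) : \sum_k G k = \sum_k G (prm s k).
Proof. exact: (reindex_inj (@prm_inj n s)). Qed.

Lemma sum_prmP n s (G : midx n -> {mpoly R[4]}) : \sum_k G k = \sum_k G (prm s k).
Proof. exact: (reindex_inj (@prm_inj n s)). Qed.

Lemma cns0 n j (k : midx n) : cns j k ord0 = j.
Proof. by rewrite ffunE unlift_none. Qed.
Lemma cnsS n j (k : midx n) y : cns j k (lift ord0 y) = k y.
Proof. by rewrite ffunE liftK. Qed.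

Lemma tl_cns n j (k : midx n) : tl (cns j k) = k.
Proof. by apply/ffunP => y; rewrite ffunE cnsS. Qed.
Lemma cns_tl n (k : midx n.+1) : cns (k ord0) (tl k) = k.
Proof.
apply/ffunP => x; rewrite ffunE; case: unliftP => [y ->|->] //.
by rewrite ffunE.
Qed.

Lemma sum_cns n (G : midx n.+1 -> {mpoly R[4]}) :
  \sum_k G k = \sum_(j : 'I_4) \sum_(k : midx n) G (cns j k).
Proof.
rewrite pair_big /=.
rewrite (reindex (fun p : 'I_4 * midx n => cns p.1 p.2)) //=.
exists (fun k : midx n.+1 => (k ord0, tl k)) => [[j k] _|k _] /=.
  by rewrite cns0 tl_cns.
by rewrite cns_tl.
Qed.

Lemma mnm_cns n j (k : midx n) : mnm (cns j k) = (U_(j) + mnm k)%MM.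
Proof.
rewrite /mnm big_ord_recl cns0; congr (_ + _)%MM.
by apply: eq_bigr => y _; rewrite cnsS.
Qed.

Lemma Phi_cns n (F : midx n.+1 -> R) :
  Phi F = \sum_j 'X_j * Phi (fun k => F (cns j k)).
Proof.
rewrite /Phi sum_cns; apply: eq_bigr => j _.
rewrite mulr_sumr; apply: eq_bigr => k _.
by rewrite mnm_cns mpolyXD scalerAr.
Qed.

Lemma mnm_ext2 p (k : midx p) j l : mnm (ext2 k j l) = (mnm k + U_(j) + U_(l))%MM.
Proof.
rewrite /mnm big_split_ord /= -addmA; congr (_ + _)%MM.
  apply: eq_bigr => x _; rewrite ffunE.
  by have := unsplitK (inl x : 'I_p + 'I_2); rewrite /= => ->.
have E y : ext2 k j l (rshift p y) = if (y : nat) == 0%N then j else l.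
  by rewrite ffunE; have := unsplitK (inr y : 'I_p + 'I_2); rewrite /= => ->.
rewrite !big_ord_recr big_ord0 /= !E /=.
by rewrite add0m.
Qed.

Lemma Phi_coef n (F : midx n -> R) m : (Phi F)@_m = \sum_k F k * (mnm k == m)%:R.
Proof.
rewrite /Phi raddf_sum; apply: eq_bigr => k _ /=. rewrite linearZ /=.
by rewrite mcoeffX.
Qed.

Lemma PhiB n (F G : midx n -> R) : Phi (fun k => F k - G k) = Phi F - Phi G.
Proof. by rewrite /Phi -sumrB; apply: eq_bigr => k _; rewrite scalerBl. Qed.

Lemma PhiZ n c (F : midx n -> R) : Phi (fun k => c * F k) = c *: Phi F.
Proof. by rewrite /Phi scaler_sumr; apply: eq_bigr => k _; rewrite scalerA. Qed.

Lemma Phi_sum n (I : finType) (F : I -> midx n -> R) :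
  Phi (fun k => \sum_i F i k) = \sum_i Phi (F i).
Proof.
rewrite /Phi (exchange_big) /=; apply: eq_bigr => k _.
by rewrite scaler_suml.
Qed.

Lemma mnm_perm n (k k0 : midx n) : mnm k = mnm k0 ->
  exists s : {perm 'I_n}, k = prm s k0.
Proof.
move=> E.
have P : perm_eq [tuple k x | x < n] [tuple k0 x | x < n].
  apply/allP => c _; apply/eqP.
  have C (kk : midx n) : count_mem c [tuple kk x | x < n] = mnm kk c.
    rewrite mnmE' /= count_map -sum1_count big_mkcond /=.
    by rewrite -big_enum /=; apply: eq_bigr => i _; case: (kk i == c).
  by rewrite !C E.
case/tuple_permP: P => s Hs; exists s; apply/ffunP => x.
have Ht : [tuple k x | x < n] = [tuple tnth [tuple k0 x0 | x0 < n] (s i) | i < n] := val_inj Hs.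
have := congr1 (fun t => tnth t x) Ht.
by rewrite !tnth_mktuple ffunE.
Qed.



Lemma prmE n s (k : midx n) x : prm s k x = k (s x).
Proof. by rewrite ffunE. Qed.

Lemma Phi_inj n (F : midx n -> R) : totally_symmetric F -> Phi F = 0 -> forall k, F k = 0.
Proof.
move=> sF H k0.
have := Phi_coef F (mnm k0); rewrite H mcoeff0 => /esym.
have -> : \sum_(k : midx n) F k * (mnm k == mnm k0)%:R = F k0 * (\sum_(k : midx n) (mnm k == mnm k0)%:R).
  rewrite mulr_sumr; apply: eq_bigr => k _.
  case: eqP => [/mnm_perm [s ->]|_]; last by rewrite !mulr0.
  by rewrite (sF s k0).
move/eqP; rewrite mulf_eq0 => /orP [/eqP //|].
by rewrite -natr_sum pnatr_eq0 (bigD1 k0) //= eqxx.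
Qed.

Lemma Phi_deriv n (F : midx n.+1 -> R) j : totally_symmetric F ->
  mderiv j (Phi F) = n.+1%:R *: Phi (fun k => F (cns j k)).
Proof.
move=> sF.
rewrite /Phi raddf_sum /=.
transitivity (\sum_(x < n.+1) \sum_(k : midx n.+1) ((k x == j)%:R * F k) *: 'X_[mnm k - U_(j)]).
  rewrite exchange_big; apply: eq_bigr => k _ /=.
  rewrite linearZ /= mderivX mnmE' natr_sum scalerA -scaler_suml -mulr_suml mulrC.
  by [].
have Hx x : \sum_(k : midx n.+1) ((k x == j)%:R * F k) *: 'X_[mnm k - U_(j)]
   = \sum_(k : midx n.+1) ((k ord0 == j)%:R * F k) *: 'X_[mnm k - U_(j)].
  rewrite (sum_prmP (tperm ord0 x)); apply: eq_bigr => k _.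
  by rewrite mnm_prm prmE tpermR (sF (tperm ord0 x) k).
rewrite (eq_bigr _ (fun x _ => Hx x)) sumr_const card_ord -scaler_nat.
congr (_ *: _).
rewrite sum_cns (bigD1 j) //= [X in _ + X]big1 ?addr0; last first.
  by move=> j' nj; apply: big1 => k _; rewrite cns0 (negbTE nj) mul0r scale0r.
apply: eq_bigr => k _.
by rewrite cns0 eqxx mul1r mnm_cns addmC addmK.
Qed.

Lemma Phi_sym q i (S : midx q -> R) : Phi (sym_delta_S i S) = 'X_i * Phi S.
Proof.
rewrite /Phi /sym_delta_S.
transitivity (((q.+1)`!%:R)^-1 *: \sum_(s : {perm 'I_q.+1}) \sum_(k : midx q.+1)
   (kdelta i (k (s ord0)) * S [ffun x => k (s (lift ord0 x))]) *: 'X_[mnm k]).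
  rewrite [in RHS]exchange_big scaler_sumr; apply: eq_bigr => k _.
  by rewrite -scalerA scaler_suml.
have Hs (s : {perm 'I_q.+1}) : \sum_(k : midx q.+1)
   (kdelta i (k (s ord0)) * S [ffun x => k (s (lift ord0 x))]) *: 'X_[mnm k]
   = 'X_i * Phi S.
  rewrite (sum_prmP (s^-1)%g).
  transitivity (\sum_(k : midx q.+1) (kdelta i (k ord0) * S (tl k)) *: 'X_[mnm k]).
    apply: eq_bigr => k _; rewrite mnm_prm prmE permK; congr (_ * S _ *: _).
    by apply/ffunP => x; rewrite !ffunE permK.
  rewrite sum_cns /Phi mulr_sumr (bigD1 i) //= [X in _ + X]big1 ?addr0.
    apply: eq_bigr => K _.
    by rewrite cns0 tl_cns mnm_cns mpolyXD /kdelta eqxx mul1r -scalerAr.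
  move=> j nj; apply: big1 => K _.
  by rewrite cns0 /kdelta eq_sym (negbTE nj) mul0r scale0r.
rewrite (eq_bigr _ (fun s _ => Hs s)) sumr_const card_Sn -scaler_nat scalerA.
by rewrite mulVf ?scale1r // pnatr_eq0 -lt0n fact_gt0.
Qed.

Lemma sym_sym q i (S : midx q -> R) : totally_symmetric (sym_delta_S i S).
Proof.
move=> sg k; rewrite /sym_delta_S; congr (_ * _).
rewrite [RHS](reindex_inj (mulIg sg)) /=.
apply: eq_bigr => s _; rewrite !ffunE !permM; congr (_ * S _).
by apply/ffunP => x; rewrite !ffunE permM.
Qed.

Lemma mderivXU (j j' : 'I_4) : mderiv j' ('X_j : {mpoly R[4]}) = (j == j')%:R.
Proof.
rewrite mderivX mnm1E; case: eqP => [<-|_]; last by rewrite scale0r.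
have -> : (U_(j) - U_(j) = 0 :> 'X_{1..4})%MM.
  by apply/mnmP => c; rewrite mnmBE subnn mnm0E.
by rewrite mpolyX0 scale1r.
Qed.

Definition Qp : {mpoly R[4]} := \sum_j \sum_l eta_inv j l *: ('X_j * 'X_l).

Lemma Qp_neq0 : Qp != 0.
Proof.
apply/eqP => /(congr1 (mcoeff (U_(ord0) + U_(ord0))%MM)).
rewrite mcoeff0 /Qp raddf_sum /=.
rewrite (eq_bigr (fun j => eta_inv j j * (j == ord0)%:R)).
  rewrite (bigD1 ord0) //= big1 ?addr0; last first.
    by move=> j nj; rewrite (negbTE nj) mulr0.
  by rewrite mulr1 /eta_inv /= => /eqP; rewrite oppr_eq0 oner_eq0.
move=> j _; rewrite raddf_sum (bigD1 j) //= big1 ?addr0; last first.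
  by move=> l nl; rewrite linearZ /= /eta_inv eq_sym (negbTE nl) mul0r.
rewrite linearZ /= -mpolyXD mcoeffX; congr (_ * _%:R).
case: (eqVneq j ord0) => [->|nj]; first by rewrite eqxx.
case: eqP => // /mnmP/(_ j); rewrite !mnmDE !mnm1E eqxx eq_sym (negbTE nj) //.
Qed.

End Aux.
Unset Implicit Arguments.

Theorem proposition3p1 (R : realType) (A : finType) (q : nat)
  (T : A -> 'I_4 -> midx q.+1 -> R) :
  (forall al i, totally_symmetric (T al i)) ->
  (forall a : A -> midx (q.+1 + 2) -> R,
     (forall al, totally_symmetric (a al)) ->
     forall i : 'I_4,
       \sum_(al : A) \sum_(k : midx q.+1) \sum_(j : 'I_4) \sum_(l : 'I_4)
          T al i k * (eta_inv j l * a al (ext2 k j l))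
       = \sum_(al : A) \sum_(k : midx q.+1) \sum_(j : 'I_4) \sum_(l : 'I_4)
          T al j k * (eta_inv j l * a al (ext2 k i l))) ->
  exists S : A -> midx q -> R,
    (forall al, totally_symmetric (S al)) /\
    (forall al i k, T al i k = sym_delta_S i (S al) k).
Proof.
move=> sT Hyp.
pose C al (K : midx q) := \sum_(j : 'I_4) T al j (cns j K).
pose S al (K : midx q) := ((q.+1)%:R / (q.+4)%:R) * C al K.
exists S; split.
  move=> al sg K; rewrite /S /C; congr (_ * _); apply: eq_bigr => j _.
  have -> : cns j [ffun x => K (sg x)] = prm (lift_perm ord0 ord0 sg) (cns j K).
    apply/ffunP => x; rewrite prmE; case: (unliftP ord0 x) => [y ->|->].
      by rewrite lift_perm_lift !cnsS ffunE.
    by rewrite lift_perm_id !cns0.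
  exact: sT.
move=> al.
pose t i := Phi (T al i).
pose U := \sum_j \sum_l eta_inv j l *: ('X_l * t j).
have LQ i : t i * Qp R = \sum_k \sum_j \sum_l (T al i k * eta_inv j l) *: 'X_[mnm (ext2 k j l)].
  rewrite /t /Phi /Qp mulr_suml; apply: eq_bigr => k _; rewrite mulr_sumr; apply: eq_bigr => j _.
  rewrite mulr_sumr; apply: eq_bigr => l _.
  by rewrite mnm_ext2 !mpolyXD -scalerAl -scalerAr scalerA mulrA.
have LU i : 'X_i * U = \sum_k \sum_j \sum_l (T al j k * eta_inv j l) *: 'X_[mnm (ext2 k i l)].
  rewrite /U mulr_sumr [RHS]exchange_big; apply: eq_bigr => j _ /=.
  rewrite mulr_sumr [RHS]exchange_big; apply: eq_bigr => l _ /=.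
  rewrite /t /Phi mulr_sumr scaler_sumr mulr_sumr; apply: eq_bigr => k _.
  rewrite mnm_ext2 !mpolyXD -!scalerAr scalerA (mulrC (eta_inv j l)); congr (_ *: _).
  by rewrite mulrCA [RHS]mulrC; congr (_ * _); exact: mulrC.
have cf (m : 'X_{1..4}) (F : midx q.+1 -> 'I_4 -> 'I_4 -> R) (g : midx q.+1 -> 'I_4 -> 'I_4 -> 'X_{1..4}) :
    (\sum_k \sum_j \sum_l F k j l *: 'X_[g k j l])@_m = \sum_k \sum_j \sum_l F k j l * (g k j l == m)%:R.
  rewrite raddf_sum; apply: eq_bigr => k _; rewrite raddf_sum; apply: eq_bigr => j _.
  rewrite raddf_sum; apply: eq_bigr => l _ /=; by rewrite linearZ /= mcoeffX.
have col (G : A -> R) : (forall al', al' != al -> G al' = 0) -> \sum_al' G al' = G al.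
  by move=> HG; rewrite (bigD1 al) //= big1 ?addr0.
have Step1 i : t i * Qp R = 'X_i * U.
  apply/mpolyP => m.
  pose a al' (M : midx (q.+1 + 2)) : R := (al' == al)%:R * (mnm M == m)%:R.
  have sa al' : totally_symmetric (a al').
    by move=> sg M; rewrite /a; have := mnm_prm sg M; rewrite /prm => ->.
  have za al' M : al' != al -> a al' M = 0 by move=> nal; rewrite /a (negbTE nal) mul0r.
  have H := Hyp a sa i.
  rewrite !col in H; last first.
    move=> al' nal; apply: big1 => k _; apply: big1 => j _; apply: big1 => l _.
    by rewrite za // !mulr0.
    move=> al' nal; apply: big1 => k _; apply: big1 => j _; apply: big1 => l _.
    by rewrite za // !mulr0.
  rewrite LQ LU !cf; rewrite /a eqxx in H.
  apply: etrans (etrans _ H) _.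
    apply: eq_bigr => k _; apply: eq_bigr => j _; apply: eq_bigr => l _; by rewrite mul1r mulrA.
  apply: eq_bigr => k _; apply: eq_bigr => j _; apply: eq_bigr => l _; by rewrite mul1r mulrA.
have Step3 i j : 'X_j * t i = 'X_i * t j.
  by apply: (mulIf (Qp_neq0 R)); rewrite -!mulrA !Step1 mulrCA.
have Step4 i : t i = 'X_i * Phi (S al).
  have E : \sum_j mderiv j ('X_j * t i) = \sum_j mderiv j ('X_i * t j).
    by apply: eq_bigr => j _; rewrite Step3.
  have L : \sum_j mderiv j ('X_j * t i) = t i *+ 4 + q.+1%:R *: t i.
    rewrite (eq_bigr (fun j => t i + q.+1%:R *: ('X_j * Phi (fun k => T al i (cns j k))))); last first.
      move=> j _; rewrite mderivM mderivXU eqxx mul1r /t (Phi_deriv _ (sT al i)).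
      by rewrite scalerAr.
    by rewrite big_split /= sumr_const card_ord -scaler_sumr -Phi_cns.
  have Rr : \sum_j mderiv j ('X_i * t j) = t i + 'X_i * (q.+1%:R *: Phi (C al)).
    rewrite (eq_bigr (fun j => (i == j)%:R * t j + 'X_i * (q.+1%:R *: Phi (fun k => T al j (cns j k))))); last first.
      by move=> j _; rewrite mderivM mderivXU /t (Phi_deriv _ (sT al j)).
    rewrite big_split /= -mulr_sumr -scaler_sumr /C -Phi_sum; congr (_ + _).
    rewrite (bigD1 i) //= big1 ?addr0 ?eqxx ?mul1r //.
    by move=> j nj; rewrite eq_sym (negbTE nj) mul0r.
  rewrite L Rr scaler_nat -mulrnDr -scalerAr scaler_nat mulrS in E.
  move/addrI: E => E.
  rewrite /S PhiZ -scalerAr.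
  set Y := 'X_i * Phi (C al) in E *.
  have nz : (q.+4)%:R != 0 :> R by rewrite pnatr_eq0.
  apply: (scalerI nz); rewrite scaler_nat E scalerA mulrCA mulfV // mulr1.
  by rewrite scaler_nat.
move=> i k; apply/eqP; rewrite -subr_eq0; apply/eqP.
pose D k := T al i k - sym_delta_S i (S al) k.
apply: (@Phi_inj R _ D).
  by move=> sg k'; rewrite /D (sT al i sg k') (sym_sym i (S al) sg k').
by rewrite PhiB Phi_sym -/(t i) Step4 subrr.
Qed.
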